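(* Let $\mathsf R\subseteq\{\mathsf e,\mathsf c,\mathsf w\}$. Every member of $\mathsf{InRLUG}_{\mathsf R}$ embeds into the $\{\wedge,\vee,\cdot,\backslash,/,1,0\}$-reduct of some member of $\mathsf{NACCLL}^-_{\mathsf R}$, and every member of $\mathsf{CyInRLUG}_{\mathsf R}$ embeds into the $\{\wedge,\vee,\cdot,\backslash,/,1,0\}$-reduct of some member of $\mathsf{NACCLL}_{\mathsf R}$.
   Context: An $r\ell uz$-groupoid is an algebra $(A,\wedge,\vee,\cdot,\backslash,/,1,0)$ with $(A,\wedge,\vee)$ a lattice (order $\le$), $(A,\cdot,1)$ a unital groupoid (binary operation, not necessarily associative, with two-sided unit $1$), $0\in A$ arbitrary, and $x\cdot y\le z\iff y\le x\backslash z\iff x\le z/y$. Write ${\sim}x:=x\backslash 0$, $-x:=0/x$. It is involutive if ${\sim}(-x)=x=-({\sim}x)$ and $({\sim}x)/y=x\backslash(-y)$; cyclic if moreover ${\sim}x=-x$. Equations: $(\mathsf e)$ $x\cdot y\le y\cdot x$; $(\mathsf c)$ $x\le x\cdot x$; $(\mathsf w)$: both $x\le 1$ and $0\le x$. $\mathsf{InRLUG}_{\mathsf R}$ ($\mathsf{CyInRLUG}_{\mathsf R}$): involutive (cyclic involutive) $r\ell uz$-groupoids satisfying $\mathsf R$. An NACCLL$^-$-algebra is an involutive $r\ell uz$-groupoid with a unary $!$ satisfying $1\le !1$, $!x\cdot!y\le !(x\cdot y)$, $!x\le x$, $!x\le !!x$, $x\le y\Rightarrow !x\le !y$, and $!x\le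 1$, $!x\le !x\cdot!x$, $!x\cdot y=y\cdot !x$, $!x\cdot(y\cdot z)=(!x\cdot y)\cdot z$, $x\cdot(y\cdot !z)=(x\cdot y)\cdot !z$; an NACCLL-algebra is one whose reduct is cyclic. $\mathsf{NACCLL}^-_{\mathsf R}$, $\mathsf{NACCLL}_{\mathsf R}$: those satisfying $\mathsf R$. An embedding is an injective homomorphism; the $\mathcal N$-reduct forgets operations outside $\mathcal N$. *)

(* Defs.v *)
Record rluz_sig := RluzSig {
  car : Type;
  meet : car -> car -> car;
  join : car -> car -> car;
  mul  : car -> car -> car;
  ldiv : car -> car -> car;
  rdiv : car -> car -> car;
  one  : car;
  zero : car
}.

Arguments meet {r}. Arguments join {r}. Arguments mul {r}.
Arguments ldiv {r}. Arguments rdiv {r}. Arguments one {r}. Arguments zero {r}.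

Definition le {A : rluz_sig} (x y : car A) : Prop := meet x y = x.

Definition is_lattice (A : rluz_sig) : Prop :=
  (forall x y z : car A, meet x (meet y z) = meet (meet x y) z) /\
  (forall x y z : car A, join x (join y z) = join (join x y) z) /\
  (forall x y : car A, meet x y = meet y x) /\
  (forall x y : car A, join x y = join y x) /\
  (forall x y : car A, meet x (join x y) = x) /\
  (forall x y : car A, join x (meet x y) = x).

(* rluz-groupoid: lattice, unital groupoid (not nec. associative), residuation *)
Definition is_rluz (A : rluz_sig) : Prop :=
  is_lattice A /\
  (forall x : car A, mul one x = x /\ mul x one = x) /\
  (forall x y z : car A,
     (le (mul x y) z <-> le y (ldiv x z)) /\
     (le (mul x y) z <-> le x (rdiv z y))).

Definition tneg {A : rluz_sig} (x : car A) : car A := ldiv x zero.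
Definition mneg {A : rluz_sig} (x : car A) : car A := rdiv zero x.

Definition is_involutive (A : rluz_sig) : Prop :=
  is_rluz A /\
  (forall x : car A, tneg (mneg x) = x /\ mneg (tneg x) = x) /\
  (forall x y : car A, rdiv (tneg x) y = ldiv x (mneg y)).

Definition is_cyclic_involutive (A : rluz_sig) : Prop :=
  is_involutive A /\ (forall x : car A, tneg x = mneg x).

Record eqset := EqSet { has_e : bool; has_c : bool; has_w : bool }.

Definition sat (R : eqset) (A : rluz_sig) : Prop :=
  (has_e R = true -> forall x y : car A, le (mul x y) (mul y x)) /\
  (has_c R = true -> forall x : car A, le x (mul x x)) /\
  (has_w R = true -> forall x : car A, le x one /\ le zero x).

Record nac_sig := NacSig { nbase : rluz_sig; bang : car nbase -> car nbase }.

Definition is_NACCLLm (B : nac_sig) : Prop :=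
  let A := nbase B in let b := bang B in
  is_involutive A /\
  le (one : car A) (b one) /\
  (forall x y : car A, le (mul (b x) (b y)) (b (mul x y))) /\
  (forall x : car A, le (b x) x) /\
  (forall x : car A, le (b x) (b (b x))) /\
  (forall x y : car A, le x y -> le (b x) (b y)) /\
  (forall x : car A, le (b x) one) /\
  (forall x : car A, le (b x) (mul (b x) (b x))) /\
  (forall x y : car A, mul (b x) y = mul y (b x)) /\
  (forall x y z : car A, mul (b x) (mul y z) = mul (mul (b x) y) z) /\
  (forall x y z : car A, mul x (mul y (b z)) = mul (mul x y) (b z)).

Definition is_NACCLL (B : nac_sig) : Prop :=
  is_NACCLLm B /\ is_cyclic_involutive (nbase B).

Definition is_embedding (A C : rluz_sig) (f : car A -> car C) : Prop :=
  (forall x y, f x = f y -> x = y) /\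
  (forall x y, f (meet x y) = meet (f x) (f y)) /\
  (forall x y, f (join x y) = join (f x) (f y)) /\
  (forall x y, f (mul x y) = mul (f x) (f y)) /\
  (forall x y, f (ldiv x y) = ldiv (f x) (f y)) /\
  (forall x y, f (rdiv x y) = rdiv (f x) (f y)) /\
  f one = one /\ f zero = zero.

(* Main.v *)
Require Import Defs.
From Stdlib Require Import ClassicalEpsilon Setoid.

Section Gen.
Variable C : rluz_sig.
Hypothesis HC : is_rluz C.

Lemma g_meet_idem (x : car C) : meet x x = x.
Proof.
  destruct HC as [[m1 [j1 [mc [jc [a1 a2]]]]] _].
  rewrite <- (a2 x x) at 2. apply a1.
Qed.

Lemma g_le_refl (x : car C) : le x x.
Proof. apply g_meet_idem. Qed.

Lemma g_join_idem (x : car C) : join x x = x.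
Proof.
  destruct HC as [[m1 [j1 [mc [jc [a1 a2]]]]] _].
  rewrite <- (a1 x x) at 2. apply a2.
Qed.

Lemma g_le_trans (x y z : car C) : le x y -> le y z -> le x z.
Proof.
  destruct HC as [[m1 [j1 [mc [jc [a1 a2]]]]] _].
  unfold le; intros H1 H2. rewrite <- H1, <- m1, H2. reflexivity.
Qed.

Lemma g_le_antisym (x y : car C) : le x y -> le y x -> x = y.
Proof.
  destruct HC as [[m1 [j1 [mc [jc [a1 a2]]]]] _].
  unfold le; intros H1 H2. rewrite <- H1, mc. exact H2.
Qed.

Lemma g_mono_l (a a' b : car C) : le a a' -> le (mul a b) (mul a' b).
Proof.
  destruct HC as [_ [_ res]]. intro H.
  apply (proj2 (res a b _)). apply (g_le_trans _ a'); auto.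
  apply (proj2 (res a' b _)). apply g_le_refl.
Qed.

Lemma g_mono_r (a b b' : car C) : le b b' -> le (mul a b) (mul a b').
Proof.
  destruct HC as [_ [_ res]]. intro H.
  apply (proj1 (res a b _)). apply (g_le_trans _ b'); auto.
  apply (proj1 (res a b' _)). apply g_le_refl.
Qed.

Lemma g_one_mul (a b : car C) : le one a -> le one b -> le one (mul a b).
Proof.
  intros Ha Hb. destruct HC as [_ [U _]].
  apply (g_le_trans _ (mul a one)).
  - rewrite (proj2 (U a)). exact Ha.
  - apply g_mono_r. exact Hb.
Qed.

Variable bot : car C.
Hypothesis Hbot : forall x, le bot x.
Hypothesis Habs : forall x, mul bot x = bot /\ mul x bot = bot.

Definition gbang (x : car C) : car C :=
  if excluded_middle_informative (le one x) then one else bot.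

Lemma gbang_cases x : (gbang x = one /\ le one x) \/ (gbang x = bot /\ ~ le one x).
Proof. unfold gbang. destruct (excluded_middle_informative (le one x)); auto. Qed.

Lemma gbang_props :
  le (one : car C) (gbang one) /\
  (forall x y : car C, le (mul (gbang x) (gbang y)) (gbang (mul x y))) /\
  (forall x : car C, le (gbang x) x) /\
  (forall x : car C, le (gbang x) (gbang (gbang x))) /\
  (forall x y : car C, le x y -> le (gbang x) (gbang y)) /\
  (forall x : car C, le (gbang x) one) /\
  (forall x : car C, le (gbang x) (mul (gbang x) (gbang x))) /\
  (forall x y : car C, mul (gbang x) y = mul y (gbang x)) /\
  (forall x y z : car C, mul (gbang x) (mul y z) = mul (mul (gbang x) y) z) /\
  (forall x y z : car C, mul x (mul y (gbang z)) = mul (mul x y) (gbang z)).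
Proof.
  assert (U := proj1 (proj2 HC)).
  assert (Hb1 : gbang one = one).
  { destruct (gbang_cases one) as [[H _]|[_ H]]; auto. exfalso; apply H, g_le_refl. }
  repeat split.
  - rewrite Hb1. apply g_le_refl.
  - intros x y. destruct (gbang_cases x) as [[E1 H1]|[E1 H1]]; rewrite E1.
    + destruct (gbang_cases y) as [[E2 H2]|[E2 H2]]; rewrite E2.
      * destruct (gbang_cases (mul x y)) as [[E3 H3]|[E3 H3]]; rewrite E3.
        -- rewrite (proj1 (U one)). apply g_le_refl.
        -- exfalso. apply H3, g_one_mul; auto.
      * rewrite (proj2 (Habs _)). apply Hbot.
    + rewrite (proj1 (Habs _)). apply Hbot.
  - intros x. destruct (gbang_cases x) as [[E1 H1]|[E1 H1]]; rewrite E1; auto.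
  - intros x. destruct (gbang_cases x) as [[E1 H1]|[E1 H1]]; rewrite E1; auto.
    rewrite Hb1. apply g_le_refl.
  - intros x y Hxy. destruct (gbang_cases x) as [[E1 H1]|[E1 H1]]; rewrite E1; auto.
    destruct (gbang_cases y) as [[E2 H2]|[E2 H2]]; rewrite E2.
    + apply g_le_refl.
    + exfalso. apply H2. eapply g_le_trans; eauto.
  - intros x. destruct (gbang_cases x) as [[E1 H1]|[E1 H1]]; rewrite E1; auto.
    apply g_le_refl.
  - intros x. destruct (gbang_cases x) as [[E1 H1]|[E1 H1]]; rewrite E1.
    + rewrite (proj1 (U one)). apply g_le_refl.
    + rewrite (proj1 (Habs _)). apply g_le_refl.
  - intros x y. destruct (gbang_cases x) as [[E1 H1]|[E1 H1]]; rewrite E1.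
    + rewrite (proj1 (U y)), (proj2 (U y)). reflexivity.
    + rewrite (proj1 (Habs _)), (proj2 (Habs _)). reflexivity.
  - intros x y z. destruct (gbang_cases x) as [[E1 H1]|[E1 H1]]; rewrite E1.
    + rewrite !(proj1 (U _)). reflexivity.
    + rewrite !(proj1 (Habs _)). reflexivity.
  - intros x y z. destruct (gbang_cases z) as [[E1 H1]|[E1 H1]]; rewrite E1.
    + rewrite !(proj2 (U _)). reflexivity.
    + rewrite !(proj2 (Habs _)). reflexivity.
Qed.
End Gen.

Inductive ext (T : Type) := Bot | Top | In (a : T).
Arguments Bot {T}. Arguments Top {T}. Arguments In {T}.

Section Ext.
Variable A : rluz_sig.
Definition T := car A.

Definition emeet (x y : ext T) : ext T :=
  match x, y with Bot, _ => Bot | _, Bot => Bot | Top, y => y | x, Top => x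
  | In a, In b => In (meet a b) end.
Definition ejoin (x y : ext T) : ext T :=
  match x, y with Top, _ => Top | _, Top => Top | Bot, y => y | x, Bot => x
  | In a, In b => In (join a b) end.
Definition emul (x y : ext T) : ext T :=
  match x, y with Bot, _ => Bot | _, Bot => Bot | Top, _ => Top | _, Top => Top
  | In a, In b => In (mul a b) end.
Definition eldiv (x z : ext T) : ext T :=
  match x, z with Bot, _ => Top | _, Top => Top | Top, _ => Bot | In _, Bot => Bot
  | In a, In c => In (ldiv a c) end.
Definition erdiv (z y : ext T) : ext T :=
  match z, y with _, Bot => Top | Top, _ => Top | _, Top => Bot | Bot, In _ => Bot
  | In c, In b => In (rdiv c b) end.

Definition Ext : rluz_sig := RluzSig (ext T) emeet ejoin emul eldiv erdiv (In one) (In zero).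

Definition eleP (x y : ext T) : Prop :=
  match x, y with Bot, _ => True | _, Top => True | In a, In b => le a b | _, _ => False end.

Lemma ele_iff (x y : car Ext) : le x y <-> eleP x y.
Proof.
  unfold le; destruct x, y; simpl; split; intros; auto; try discriminate; try contradiction;
  try congruence; try (injection H; auto); subst; auto.
  all: unfold le in *; rewrite H; reflexivity.
Qed.

Hypothesis HA : is_rluz A.

Lemma ext_rluz : is_rluz Ext.
Proof.
  pose proof HA as HA'.
  destruct HA' as [[m1 [j1 [mc [jc [a1 a2]]]]] [U res]].
  pose proof (g_meet_idem A HA) as mi. pose proof (g_join_idem A HA) as ji.
  split; [|split].
  - repeat split; intros; simpl;
      repeat match goal with x : car Ext |- _ => destruct x end; simpl;
      try reflexivity; f_equal; auto.
  - intros x; destruct x; simpl; split; try reflexivity; f_equal; apply U.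
  - intros x y z. rewrite !ele_iff.
    destruct x, y, z; simpl; try tauto; apply res.
Qed.

Hypothesis HI : is_involutive A.

Lemma ext_inv : is_involutive Ext.
Proof.
  destruct HI as [_ [I1 I2]].
  split; [apply ext_rluz|split].
  - intros x; destruct x; unfold tneg, mneg; simpl; auto.
    destruct (I1 a) as [E1 E2]. unfold tneg, mneg in E1, E2. rewrite E1, E2. auto.
  - intros x y; destruct x, y; unfold tneg, mneg; simpl; auto.
    f_equal. apply I2.
Qed.

Lemma ext_cyc : is_cyclic_involutive A -> is_cyclic_involutive Ext.
Proof.
  intros [_ Hc]. split; [apply ext_inv|].
  intros x; destruct x; unfold tneg, mneg; simpl; auto.
  f_equal. apply Hc.
Qed.

Lemma ext_sat R : has_w R = false -> sat R A -> sat R Ext.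
Proof.
  intros Hw [He [Hc _]]. split; [|split].
  - intros H x y. rewrite ele_iff. destruct x, y; simpl; auto; apply He; auto.
  - intros H x. rewrite ele_iff. destruct x; simpl; auto; apply Hc; auto.
  - rewrite Hw; discriminate.
Qed.

Lemma ext_emb : is_embedding A Ext In.
Proof.
  repeat split; auto. intros x y H; injection H; auto.
Qed.

Lemma ext_bot : forall x : car Ext, le (Bot : car Ext) x.
Proof. intros; apply ele_iff; exact I. Qed.
Lemma ext_abs : forall x : car Ext, mul (Bot : car Ext) x = Bot /\ mul x (Bot : car Ext) = Bot.
Proof. intros x; destruct x; simpl; auto. Qed.
End Ext.

Lemma key (R : eqset) (A : rluz_sig) : is_involutive A -> sat R A ->
  exists B : nac_sig, is_NACCLLm B /\ sat R (nbase B) /\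
    (is_cyclic_involutive A -> is_cyclic_involutive (nbase B)) /\
    exists f : car A -> car (nbase B), is_embedding A (nbase B) f.
Proof.
  intros HI HS.
  assert (HR : is_rluz A) by apply HI.
  destruct (has_w R) eqn:Hw.
  - assert (Hbot : forall x : car A, le zero x) by (intro x; apply (proj2 (proj2 HS) Hw x)).
    assert (Habs : forall x : car A, mul zero x = zero /\ mul x zero = zero).
    { pose proof HR as [_ [_ res]]. intro x; split; apply (g_le_antisym A HR); auto.
      - apply (proj2 (proj2 (res _ _ _))). apply Hbot.
      - apply (proj2 (proj1 (res _ _ _))). apply Hbot. }
    exists (NacSig A (gbang A zero)). simpl. split; [|split; [|split]].
    + split; [exact HI|]. apply gbang_props; auto.
    + exact HS.
    + auto.
    + exists (fun x => x). repeat split; auto.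
  - exists (NacSig (Ext A) (gbang (Ext A) Bot)). simpl. split; [|split; [|split]].
    + split; [apply ext_inv; auto|]. apply gbang_props.
      * apply ext_rluz; auto.
      * apply ext_bot.
      * apply ext_abs.
    + apply ext_sat; auto.
    + apply ext_cyc; auto.
    + exists In. apply ext_emb.
Qed.

Theorem mainTheorem16 (R : eqset) :
  (forall A : rluz_sig, is_involutive A -> sat R A ->
     exists B : nac_sig, is_NACCLLm B /\ sat R (nbase B) /\
       exists f : car A -> car (nbase B), is_embedding A (nbase B) f) /\
  (forall A : rluz_sig, is_cyclic_involutive A -> sat R A ->
     exists B : nac_sig, is_NACCLL B /\ sat R (nbase B) /\
       exists f : car A -> car (nbase B), is_embedding A (nbase B) f).
Proof.
  split.
  - intros A HI HS. destruct (key R A HI HS) as [B [H1 [H2 [_ H4]]]]. eauto.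
  - intros A HC HS. destruct (key R A (proj1 HC) HS) as [B [H1 [H2 [H3 H4]]]].
    exists B. split; [split; auto|]. auto.
Qed.
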